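(* Let $p\in(0,1)$ and let $(\lambda_n)_{n\ge1}$ be a sequence with $\lambda_1=1$ and $0\le\lambda_n\le\lambda_{n-1}$ for all $n>1$. Let $r_1,r_2,\dots$ be $\{0,1\}$-valued random variables with $\Pr(r_1=1)=p$ and, for every $n\ge2$, $\Pr(r_n=1\mid r_1,\dots,r_{n-1})=\lambda_n p+(1-\lambda_n)\bar p_{n-1}$, where $\bar p_m=\frac1m\sum_{i=1}^m r_i$. Then \[\lim_{n\to\infty}\mathbb{E}\big[(\bar p_n-p)^2\big]=\lim_{n\to\infty}p(1-p)\sum_{i=1}^{n-1}\frac{1}{i(i+1)}\prod_{j=i+1}^{n-1}\Big(1-\frac{2\lambda_j}{j+1}\Big).\] *)

(* Defs.v *)
From HB Require Import structures.
From mathcomp Require Import all_boot all_order all_algebra.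
From mathcomp Require Import all_classical all_reals all_analysis.
Set Implicit Arguments. Unset Strict Implicit. Unset Printing Implicit Defensive.
Import Order.TTheory GRing.Theory Num.Theory.
Import numFieldNormedType.Exports.
Local Open Scope classical_set_scope.
Local Open Scope ring_scope.

Definition pbar {T : Type} {R : realType} (r : nat -> T -> bool) (m : nat) (t : T) : R :=
  (m%:R)^-1 * \sum_(1 <= i < m.+1) ((r i t)%:R : R).

Definition hist_event {T : Type} (r : nat -> T -> bool) (n : nat) (b : nat -> bool) : set T :=
  [set t | forall i, (1 <= i < n)%N -> r i t = b i].

Definition bmean {R : realType} (b : nat -> bool) (m : nat) : R :=
  (m%:R)^-1 * \sum_(1 <= i < m.+1) ((b i)%:R : R).

Definition rhs_seq {R : realType} (p : R) (lam : nat -> R) (n : nat) : R :=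
  p * (1 - p) * \sum_(1 <= i < n)
     ((i%:R * (i.+1)%:R)^-1 * \prod_(i.+1 <= j < n) (1 - 2 * lam j / (j.+1)%:R)).

(* Main.v *)
Require Import Defs.
From HB Require Import structures.
From mathcomp Require Import all_boot all_order all_algebra.
From mathcomp Require Import all_classical all_reals all_analysis.
From mathcomp Require Import ring lra measurable_realfun.
Import Order.TTheory GRing.Theory Num.Theory.
Import numFieldNormedType.Exports.
Local Open Scope classical_set_scope.
Local Open Scope ring_scope.

Definition upd (b : nat -> bool) (k : nat) (v : bool) : nat -> bool :=
  fun i => if i == k then v else b i.

Fixpoint Ssum {R : realType} (n : nat) (F : (nat -> bool) -> R) : R :=
  match n with
  | 0 => F (fun _ => false)
  | n'.+1 => Ssum n' (fun b => F (upd b n'.+1 true) + F (upd b n'.+1 false))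
  end.

Lemma Ssum_ext {R : realType} n (F G : (nat -> bool) -> R) :
  (forall b, F b = G b) -> Ssum n F = Ssum n G.
Proof.
elim: n F G => [|n IH] F G FG /=; first exact: FG.
by apply: IH => b; rewrite !FG.
Qed.

Lemma SsumD {R : realType} n (F G : (nat -> bool) -> R) :
  Ssum n (fun b => F b + G b) = Ssum n F + Ssum n G.
Proof.
elim: n F G => [|n IH] F G //=.
rewrite -IH; apply: Ssum_ext => b; ring.
Qed.

Lemma SsumZ {R : realType} n (a : R) (F : (nat -> bool) -> R) :
  Ssum n (fun b => a * F b) = a * Ssum n F.
Proof.
elim: n F => [|n IH] F //=.
rewrite -IH; apply: Ssum_ext => b; ring.
Qed.

Lemma Ssum_ge0 {R : realType} n (F : (nat -> bool) -> R) :
  (forall b, 0 <= F b) -> 0 <= Ssum n F.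
Proof.
elim: n F => [|n IH] F F0 //=.
by apply: IH => b; apply: addr_ge0.
Qed.

Definition Dsum {R : realType} (p : R) (n : nat) (b : nat -> bool) : R :=
  \sum_(1 <= i < n.+1) ((b i)%:R : R) - n%:R * p.

Lemma Dsum_upd {R : realType} (p : R) n b v :
  Dsum p n.+1 (upd b n.+1 v) = Dsum p n b + (v%:R : R) - p.
Proof.
rewrite /Dsum big_nat_recr //= /upd eqxx.
rewrite (eq_big_nat _ _ (F2 := fun i => ((b i)%:R : R))); last first.
  by move=> i /andP[_ hi]; rewrite ifN // neq_ltn hi.
rewrite -[n.+1]addn1 natrD; ring.
Qed.

Lemma bmean_upd {R : realType} n b v :
  bmean (upd b n.+1 v) n = bmean b n :> R.
Proof.
rewrite /bmean; congr (_ * _); apply: eq_big_nat => i /andP[_ hi].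
by rewrite /upd ifN // neq_ltn hi.
Qed.

Lemma c_sub {R : realType} (p : R) (lam : nat -> R) n b :
  lam 1%N = 1 ->
  lam n.+1 * p + (1 - lam n.+1) * bmean b n - p =
  (1 - lam n.+1) / n%:R * Dsum p n b.
Proof.
move=> l1; case: n => [|n].
  rewrite l1 /bmean /Dsum big_geq // subrr !mul0r; ring.
rewrite /bmean /Dsum.
have hn : (n.+1%:R : R) != 0 by rewrite pnatr_eq0.
by field; rewrite addrC natr1.
Qed.

Definition cc {R : realType} (p : R) (lam : nat -> R) n b :=
  lam n.+1 * p + (1 - lam n.+1) * bmean b n.

Definition kk {R : realType} (lam : nat -> R) n := (1 - lam n.+1) / n%:R.

Lemma Ssum_step {R : realType} (p : R) lam (w : nat -> (nat -> bool) -> R) F n :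
  (forall n b, w n.+1 (upd b n.+1 true) = cc p lam n b * w n b) ->
  (forall n b, w n.+1 (upd b n.+1 false) = (1 - cc p lam n b) * w n b) ->
  Ssum n.+1 (fun b => F b * w n.+1 b) =
  Ssum n (fun b => (cc p lam n b * F (upd b n.+1 true) +
                    (1 - cc p lam n b) * F (upd b n.+1 false)) * w n b).
Proof.
move=> wT wF /=; apply: Ssum_ext => b; rewrite wT wF; ring.
Qed.

Lemma moments {R : realType} (p : R) lam (w : nat -> (nat -> bool) -> R) :
  lam 1%N = 1 ->
  (forall b, w 0%N b = 1) ->
  (forall n b, w n.+1 (upd b n.+1 true) = cc p lam n b * w n b) ->
  (forall n b, w n.+1 (upd b n.+1 false) = (1 - cc p lam n b) * w n b) ->
  forall n,
  [/\ Ssum n (fun b => w n b) = 1,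
      Ssum n (fun b => Dsum p n b * w n b) = 0 &
      Ssum n.+1 (fun b => Dsum p n.+1 b ^+ 2 * w n.+1 b) =
      (1 + 2 * kk lam n) * Ssum n (fun b => Dsum p n b ^+ 2 * w n b) + p * (1 - p)].
Proof.
move=> l1 w0 wT wF.
have cE n b : cc p lam n b = p + kk lam n * Dsum p n b.
  by rewrite /kk -c_sub // /cc; ring.
have M0 n : Ssum n (fun b => w n b) = 1.
  elim: n => [|n IH]; first by rewrite /= w0.
  rewrite -IH (Ssum_ext _ (fun b => w n.+1 b) (fun b => 1 * w n.+1 b)); last by move=> b; rewrite mul1r.
  rewrite (Ssum_step _ _ _ _ _ wT wF); apply: Ssum_ext => b; ring.
have M1 n : Ssum n (fun b => Dsum p n b * w n b) = 0.
  elim: n => [|n IH]; first by rewrite /= /Dsum big_geq // mul0r subrr mul0r.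
  rewrite (Ssum_step _ _ _ _ _ wT wF).
  rewrite (Ssum_ext _ _ (fun b => (1 + kk lam n) * (Dsum p n b * w n b))); last first.
    by move=> b; rewrite !Dsum_upd cE /=; ring.
  by rewrite SsumZ IH mulr0.
split => //.
rewrite (Ssum_step _ _ _ _ _ wT wF).
rewrite (Ssum_ext _ _ (fun b => (1 + 2 * kk lam n) * (Dsum p n b ^+ 2 * w n b) +
   ((p * (1 - p)) * w n b + (kk lam n * (1 - 2 * p)) * (Dsum p n b * w n b)))); last first.
  by move=> b; rewrite !Dsum_upd cE /=; ring.
by rewrite SsumD SsumD !SsumZ M0 M1 !mulr0 mulr1 addr0.
Qed.

Lemma rhs_rec {R : realType} (p : R) lam m : (1 <= m)%N ->
  rhs_seq p lam m.+1 = rhs_seq p lam m * (1 - 2 * lam m / m.+1%:R) +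
    p * (1 - p) * (m%:R * m.+1%:R)^-1.
Proof.
move=> m1; rewrite /rhs_seq big_nat_recr //= [\prod_(m.+1 <= j < m.+1) _]big_geq // mulr1.
set f := (fun j : nat => 1 - 2 * lam j / j.+1%:R).
have -> : \sum_(1 <= i < m) (i%:R * i.+1%:R)^-1 * \prod_(i.+1 <= j < m.+1) f j =
  (\sum_(1 <= i < m) (i%:R * i.+1%:R)^-1 * \prod_(i.+1 <= j < m) f j) * f m.
  rewrite big_distrl /=; apply: eq_big_nat => i /andP[_ im].
  by rewrite big_nat_recr //= mulrA.
rewrite /f; ring.
Qed.

Lemma a_rhs {R : realType} (p : R) lam (a : nat -> R) :
  a 0%N = 0 ->
  (forall n, a n.+1 = (1 + 2 * kk lam n) * a n + p * (1 - p)) ->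
  forall n, a n = n%:R * n.+1%:R * rhs_seq p lam n.+1.
Proof.
move=> a0 aS; elim=> [|n IH]; first by rewrite a0 mul0r mul0r.
case: n IH => [|n] IH.
  rewrite aS a0 mulr0 add0r /rhs_seq big_nat1 big_geq // mulr1.
  have h2 : (2%:R : R) != 0 by rewrite pnatr_eq0.
  by rewrite mul1r; field.
rewrite aS IH (rhs_rec p lam (n.+2)) //.
rewrite /kk.
have h1 : (n.+1%:R : R) != 0 by rewrite pnatr_eq0.
have h2 : (n.+2%:R : R) != 0 by rewrite pnatr_eq0.
have h3 : (n.+3%:R : R) != 0 by rewrite pnatr_eq0.
have e2 : (n.+2%:R : R) = n.+1%:R + 1 by rewrite natr1.
have e3 : (n.+3%:R : R) = n.+1%:R + 1 + 1 by rewrite !natr1.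
rewrite e3 e2 in h2 h3 *.
have hn : (0 : R) <= n%:R by apply: ler0n.
by field; apply/and3P; split; apply/eqP; lra.
Qed.

Lemma hist1 {T : Type} (r : nat -> T -> bool) b : hist_event r 1 b = setT.
Proof. by apply/seteqP; split => t // _ i /andP[h1 h2]; move: (leq_trans h1 h2). Qed.

Lemma hist_upd_low {T : Type} (r : nat -> T -> bool) n b v :
  hist_event r n.+1 (upd b n.+1 v) = hist_event r n.+1 b.
Proof.
apply/seteqP; split => t /= h i /andP[i1 i2]; have := h i; rewrite i1 i2 /upd.
all: by rewrite ifN ?neq_ltn ?i2 //; apply.
Qed.

Lemma hist_upd {T : Type} (r : nat -> T -> bool) n b v :
  hist_event r n.+2 (upd b n.+1 v) = hist_event r n.+1 b `&` [set t | r n.+1 t = v].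
Proof.
apply/seteqP; split => t; rewrite /hist_event /=.
  move=> h; split.
    move=> i /andP[i1 i2]; have := h i; rewrite i1 /upd ifN ?neq_ltn ?i2 //.
    by apply; rewrite (ltn_trans i2).
  by have := h n.+1; rewrite /upd eqxx leqnn; apply.
move=> [h hv] i /andP[i1 i2]; rewrite /upd; case: eqP => [->//|ne].
apply: h; rewrite i1 /=; rewrite ltnS leq_eqVlt in i2.
by case/orP: i2 => [/eqP//|].
Qed.

Lemma hist_meas d' (T' : measurableType d') (r : nat -> T' -> bool) n b :
  (forall k, measurable [set t | r k t]) -> measurable (hist_event r n b).
Proof.
move=> mr; elim: n => [|n IH].
  rewrite (_ : hist_event r 0 b = setT) //; apply/seteqP; split => t // _ i /andP[h1 h2]; by [].
case: n IH => [|n] IH; first by rewrite hist1.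
have -> : hist_event r n.+2 b = hist_event r n.+1 b `&` [set t | r n.+1 t = b n.+1].
  rewrite -hist_upd; congr hist_event; apply: funext => i; rewrite /upd.
  by case: eqP => // ->.
apply: measurableI => //.
case: (b n.+1).
  exact: mr.
rewrite (_ : [set t | r n.+1 t = false] = ~` [set t | r n.+1 t]).
  exact: measurableC.
by apply/seteqP; split => t /=; case: (r n.+1 t).
Qed.

Definition ww {R : realType} {d'} {T : measurableType d'} (P : probability T R)
  (r : nat -> T -> bool) n b : R := fine (P (hist_event r n.+1 b)).

Lemma key {R : realType} d' (T : measurableType d') (P : probability T R) p lam
  (r : nat -> T -> bool) :
  lam 1%N = 1 ->
  P [set t | r 1%N t] = p%:E ->
  (forall (n : nat) (b : nat -> bool), (2 <= n)%N ->
     P (hist_event r n b `&` [set t | r n t]) =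
     ((lam n * p + (1 - lam n) * bmean b n.-1)%:E * P (hist_event r n b))%E) ->
  forall n b, P (hist_event r n.+1 b `&` [set t | r n.+1 t]) =
     ((cc p lam n b)%:E * P (hist_event r n.+1 b))%E.
Proof.
move=> l1 P1 hyp [|n] b; last exact: hyp.
by rewrite hist1 setTI P1 probability_setT mule1 /cc l1 subrr mul0r addr0 mul1r.
Qed.

Lemma ww_props {R : realType} d' (T : measurableType d') (P : probability T R) p lam
  (r : nat -> T -> bool) :
  (forall k, measurable [set t | r k t]) ->
  (forall n b, P (hist_event r n.+1 b `&` [set t | r n.+1 t]) =
     ((cc p lam n b)%:E * P (hist_event r n.+1 b))%E) ->
  [/\ (forall b, ww P r 0%N b = 1),
      (forall n b, ww P r n.+1 (upd b n.+1 true) = cc p lam n b * ww P r n b) &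
      (forall n b, ww P r n.+1 (upd b n.+1 false) = (1 - cc p lam n b) * ww P r n b)].
Proof.
move=> mr K.
have fin n b : P (hist_event r n b) \is a fin_num.
  apply: fin_num_measure; exact: hist_meas.
split.
- by move=> b; rewrite /ww hist1 probability_setT.
- move=> n b; rewrite /ww hist_upd.
  rewrite (_ : [set t | r n.+1 t = true] = [set t | r n.+1 t]) // K.
  by rewrite -(fineK (fin n.+1 b)) -EFinM.
- move=> n b; rewrite /ww hist_upd.
  rewrite (_ : hist_event r n.+1 b `&` [set t | r n.+1 t = false] =
               hist_event r n.+1 b `\` [set t | r n.+1 t]); last first.
    by apply/seteqP; split => t /= [h1 h2]; split => //; move: h2; case: (r n.+1 t).
  rewrite measureD ?hist_meas //; last by rewrite ltey_eq fin.
  have := K n b; move=> KK; rewrite [X in fine (_ - X)]KK.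
  rewrite fineB ?fin_numM ?fineM //=; ring.
  exact: hist_meas.
Qed.

Definition mix (n : nat) (a : nat -> bool) : nat -> bool :=
  fun i => if (0 < i <= n)%N then a i else false.

Lemma ind1 {R : realType} {T : Type} (A : set T) t : A t -> \1_A t = 1 :> R.
Proof. by move=> h; rewrite indicE mem_set. Qed.

Lemma ind0 {R : realType} {T : Type} (A : set T) t : ~ A t -> \1_A t = 0 :> R.
Proof. by move=> h; rewrite indicE memNset. Qed.

Lemma Ssum_indic {R : realType} {T : Type} (r : nat -> T -> bool) n
  (F : (nat -> bool) -> R) t :
  Ssum n (fun b => F b * \1_(hist_event r n.+1 b) t) = F (mix n (fun i => r i t)).
Proof.
elim: n F => [|n IH] F /=.
  rewrite hist1 ind1 // mulr1; congr F; apply: funext => i; rewrite /mix.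
  by case: i.
rewrite (Ssum_ext _ _ (fun b => F (upd b n.+1 (r n.+1 t)) * \1_(hist_event r n.+1 b) t)).
  rewrite IH; congr F; apply: funext => i; rewrite /upd /mix.
  case: eqP => [->|ne]; first by rewrite ltn0Sn leqnn.
  by rewrite (leq_eqVlt i n.+1) ltnS; move/eqP: ne => /negbTE ->.
move=> b; rewrite !hist_upd !indicI /=.
case E: (r n.+1 t).
  rewrite (ind1 [set t | r n.+1 t = true] t) // (ind0 [set t | r n.+1 t = false] t); last by rewrite /= E.
  by rewrite mulr1 mulr0 mulr0 addr0.
rewrite (ind0 [set t | r n.+1 t = true] t) ?(ind1 [set t | r n.+1 t = false] t) //; last by rewrite /= E.
by rewrite mulr1 mulr0 mulr0 add0r.
Qed.

Lemma int_Ssum {R : realType} d' (T : measurableType d') (P : probability T R) n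
  (G : (nat -> bool) -> T -> R) (g : (nat -> bool) -> R) :
  (forall b t, 0 <= G b t) -> (forall b, measurable_fun setT (G b)) ->
  (forall b, (\int[P]_t (G b t)%:E = (g b)%:E)%E) ->
  (\int[P]_t (Ssum n (fun b => G b t))%:E = (Ssum n g)%:E)%E.
Proof.
elim: n G g => [|n IH] G g G0 mG iG /=; first exact: iG.
apply: (IH (fun b t => G (upd b n.+1 true) t + G (upd b n.+1 false) t)).
- by move=> b t; apply: addr_ge0.
- by move=> b; apply: measurable_funD.
- move=> b; under eq_integral do rewrite EFinD.
  rewrite ge0_integralD //.
  + by rewrite !iG -EFinD.
  + by move=> t _; rewrite lee_fin.
  + by apply/measurable_EFinP.
  + by move=> t _; rewrite lee_fin.
  + by apply/measurable_EFinP.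
Qed.

Lemma bmean_mix {R : realType} n a : bmean (mix n a) n = bmean a n :> R.
Proof.
rewrite /bmean; congr (_ * _); apply: eq_big_nat => i /andP[i1 i2].
by rewrite /mix i1 -ltnS i2.
Qed.

Lemma int_main {R : realType} d' (T : measurableType d') (P : probability T R) p
  (r : nat -> T -> bool) n :
  (forall k, measurable [set t | r k t]) ->
  (\int[P]_t ((pbar r n t - p) ^+ 2)%:E =
   (Ssum n (fun b => (bmean b n - p) ^+ 2 * ww P r n b))%:E)%E.
Proof.
move=> mr.
under eq_integral => t _.
  rewrite (_ : pbar r n t = bmean (mix n (fun i => r i t)) n); last by rewrite bmean_mix.
  rewrite -(Ssum_indic r n (fun b => (bmean b n - p) ^+ 2) t).
  over.
apply: int_Ssum.
- by move=> b t; rewrite indicE mulr_ge0 ?sqr_ge0 ?ler0n.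
- move=> b; apply: measurable_funM => //; apply: measurable_indic; exact: hist_meas.
- move=> b.
  rewrite (@integralZl_indic _ _ _ P setT measurableT (fun _ => hist_event r n.+1 b)) //.
  + rewrite integral_indic ?setIT //; last exact: hist_meas.
    rewrite /ww (EFinM ((bmean b n - p) ^+ 2)) fineK //; apply: fin_num_measure; exact: hist_meas.
  + by move=> /lt_geF; rewrite sqr_ge0.
  + exact: hist_meas.
Qed.

Theorem theoremA5 (R : realType) (d : measure_display) (T : measurableType d)
  (P : probability T R) (p : R) (lam : nat -> R) (r : nat -> T -> bool) :
  0 < p < 1 ->
  lam 1%N = 1 ->
  (forall n : nat, (1 < n)%N -> 0 <= lam n /\ lam n <= lam n.-1) ->
  (forall n : nat, measurable [set t | r n t]) ->
  P [set t | r 1%N t] = p%:E ->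
  (forall (n : nat) (b : nat -> bool), (2 <= n)%N ->
     P (hist_event r n b `&` [set t | r n t]) =
     ((lam n * p + (1 - lam n) * bmean b n.-1)%:E * P (hist_event r n b))%E) ->
  exists l : R,
    (fun n : nat => (\int[P]_t ((pbar r n t - p) ^+ 2)%:E)%E) @ \oo --> l%:E /\
    rhs_seq p lam @ \oo --> l.
Proof.
move=> /andP[p0 p1] l1 lmon mr P1 hyp.
have K := @key R d T P p lam r l1 P1 hyp.
have [w0 wT wF] := @ww_props R d T P p lam r mr K.
pose a n := Ssum n (fun b => Dsum p n b ^+ 2 * ww P r n b).
have aS n : a n.+1 = (1 + 2 * kk lam n) * a n + p * (1 - p).
  by have [_ _ E] := @moments R p lam _ l1 w0 wT wF n; rewrite /a E.
have a0 : a 0%N = 0.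
  by rewrite /a /= /Dsum big_geq // mul0r subrr expr2 !mul0r.
have aE := @a_rhs R p lam a a0 aS.
have a_ge0 n : 0 <= a n.
  apply: Ssum_ge0 => b; apply: mulr_ge0; first exact: sqr_ge0.
  exact: fine_ge0 (measure_ge0 _ _).
pose q := p * (1 - p).
have q0 : 0 <= q by apply: mulr_ge0; lra.
have rhs_ge0 m : 0 <= rhs_seq p lam m.+1.
  case: m => [|m]; first by rewrite /rhs_seq big_geq // mulr0.
  have := a_ge0 m.+1; rewrite aE pmulr_rge0 //.
have lam_ge0 m : 0 <= lam m.+1.
  by case: m => [|m]; [rewrite l1 | have [] := lmon m.+2 isT].
pose u m := rhs_seq p lam m.+1 + q / m.+1%:R.
have u_ninc : nonincreasing_seq u.
  apply/nonincreasing_seqP => m; rewrite /u (rhs_rec p lam m.+1) //.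
  set Rm := rhs_seq p lam m.+1.
  have h1 : (m.+1%:R : R) != 0 by rewrite pnatr_eq0.
  have e2 : (m.+2%:R : R) = m.+1%:R + 1 by rewrite natr1.
  have h2 : (m.+1%:R + 1 : R) != 0 by rewrite -e2 pnatr_eq0.
  have -> : Rm * (1 - 2 * lam m.+1 / m.+2%:R) + p * (1 - p) * (m.+1%:R * m.+2%:R)^-1 +
      q / m.+2%:R = Rm + q / m.+1%:R - 2 * lam m.+1 * Rm / m.+2%:R.
    have hn : (0 : R) <= m%:R by apply: ler0n.
    by rewrite /q e2; field; apply/andP; split; apply/eqP; lra.
  rewrite gerBl; apply: divr_ge0; last exact: ler0n.
  by apply: mulr_ge0; [apply: mulr_ge0 => //; lra | exact: rhs_ge0].
have u_lb : has_lbound (range u).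
  exists 0 => _ [m _ <-]; apply: addr_ge0 => //; apply: divr_ge0 => //; exact: ler0n.
have ucv := nonincreasing_cvgn u_ninc u_lb.
set l := inf _ in ucv.
have rS : (fun m => rhs_seq p lam m.+1) @ \oo --> l.
  have -> : (fun m => rhs_seq p lam m.+1) = u - (fun m => q * harmonic m).
    by apply: funext => m; rewrite /u /= addrK.
  rewrite -[l]subr0 -(mulr0 q); apply: cvgB => //; apply: cvgM => //.
    exact: cvg_cst.
  exact: cvg_harmonic.
exists l; split; last by rewrite -cvg_shiftS.
pose v n := rhs_seq p lam n.+2 * (1 + harmonic n).
have hv : (fun n => (v n)%:E) @ \oo --> l%:E.
  apply: cvg_EFin; first by apply: nearW.
  have rS2 : (fun m => rhs_seq p lam m.+2) @ \oo --> l.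
    by have := rS; rewrite -cvg_shiftS.
  rewrite -[l]mulr1 -[X in l * X](addr0 1); apply: cvgM => //.
  by apply: cvgD; [exact: cvg_cst | exact: cvg_harmonic].
have H : (fun n => (\int[P]_t ((pbar r n.+1 t - p) ^+ 2)%:E)%E) = (fun n => (v n)%:E).
  apply: funext => n; rewrite int_main //; congr EFin.
  have hn : (n.+1%:R : R) != 0 by rewrite pnatr_eq0.
  rewrite (Ssum_ext _ _ (fun b => n.+1%:R ^- 2 * (Dsum p n.+1 b ^+ 2 * ww P r n.+1 b))); last first.
    by move=> b; rewrite /bmean /Dsum; field.
  rewrite SsumZ -/(a n.+1) aE /v /=.
  have e2 : (n.+2%:R : R) = n.+1%:R + 1 by rewrite natr1.
  by rewrite e2; field; rewrite addrC natr1 pnatr_eq0.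
pose f := (fun n => (\int[P]_t ((pbar r n t - p) ^+ 2)%:E)%E).
change (f @ \oo --> l%:E).
rewrite -cvg_shiftS /=.
change ((fun n => f n.+1) @ \oo --> l%:E).
by rewrite /f H.
Qed.
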